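(* Let $q$ be an odd prime power, $P\in\mathbb{F}_q[T]$ monic irreducible, $\nu\ge1$, and $f\in\mathbb{F}_q[T]$ with $f\not\equiv0\bmod P^\nu$. Write $f\equiv P^\alpha g\bmod P^\nu$ with $0\le\alpha<\nu$ maximal and $g\in\mathbb{F}_q[T]$. Then: (1) if $\chi_q(P)=-1$, then $f\bmod P^\nu\in\mathcal{A}_q(P^\nu)$ iff $\alpha$ is even; (2) if $\chi_q(P)=0$ (i.e. $P=T$), then $f\bmod P^\nu\in\mathcal{A}_q(P^\nu)$ iff $\chi_q(g)=1$; (3) if $\chi_q(P)=1$, then $f\bmod P^\nu\in\mathcal{A}_q(P^\nu)$.
   Context: $\chi_q(f)=0$ if $f(0)=0$, $1$ if $f(0)$ is a nonzero square in $\mathbb{F}_q$, $-1$ otherwise. $\mathcal{A}_q(P^\nu)=\{A^2+TB^2\bmod P^\nu:A,B\in\mathbb{F}_q[T]\}\subseteq\mathbb{F}_q[T]/(P^\nu)$. *)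

(* Defs.v *)
From HB Require Import structures.
From mathcomp Require Import all_boot all_order all_algebra all_field.
Set Implicit Arguments. Unset Strict Implicit. Unset Printing Implicit Defensive.
Import Order.TTheory GRing.Theory Num.Theory.
Local Open Scope ring_scope.

Definition chi (F : finFieldType) (f : {poly F}) : int :=
  if f.[0] == 0 then 0
  else if [exists y : F, y ^+ 2 == f.[0]] then 1 else -1.

Definition inA (F : finFieldType) (M f : {poly F}) : Prop :=
  exists A B : {poly F}, (A ^+ 2 + 'X * B ^+ 2) %% M = f %% M.

(* Main.v *)
Require Import Defs.
From HB Require Import structures.
From mathcomp Require Import all_boot all_order all_algebra all_field all_solvable.
From mathcomp Require Import zify ring.
Set Implicit Arguments. Unset Strict Implicit. Unset Printing Implicit Defensive.
Import Order.TTheory GRing.Theory Num.Theory.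
Local Open Scope ring_scope.

Section GenFF.
Variable L : finFieldType.
Hypothesis h2 : (2%:R : L) != 0.

Lemma card_predS : #|L| = (#|L|.-1).+1.
Proof. by rewrite prednK // ltnW // finNzRing_gt1. Qed.

Lemma expf_n (x : L) : x != 0 -> x ^+ (#|L|.-1) = 1.
Proof.
move=> nx; apply: (mulfI nx); rewrite mulr1 -exprS -card_predS.
exact: expf_card.
Qed.

Lemma n_even : ~~ odd #|L|.-1.
Proof.
apply/negP => od.
have m1 : (-1 : L) != 0 by rewrite oppr_eq0 oner_neq0.
have := expf_n m1.
rewrite -signr_odd od expr1 => H.
by move: h2; rewrite -[2%N]/(1+1)%N natrD -{1}H addNr eqxx.
Qed.

Lemma prim_ex : exists z : L, (#|L|.-1).-primitive_root z.
Proof.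
have n_gt0 : (0 < #|L|.-1)%N.
  by rewrite -ltnS -card_predS finNzRing_gt1.
have : has (#|L|.-1).-primitive_root (enum (predC1 (0:L))).
  apply: has_prim_root => //.
- apply/allP => x; rewrite mem_enum /= => nx.
  by rewrite unity_rootE expf_n.
- exact: enum_uniq.
- by rewrite -cardE cardC1.
by case/hasP => z _ pz; exists z.
Qed.

Lemma euler (x : L) : x != 0 -> (exists y, y ^+ 2 = x) <-> x ^+ (#|L|.-1)./2 = 1.
Proof.
move=> nx; have ev := n_even.
have dn : (#|L|.-1 = 2 * (#|L|.-1)./2)%N.
  by rewrite -{1}(odd_double_half #|L|.-1) (negbTE ev) add0n -muln2 mulnC.
split.
  case=> y yx; rewrite -yx -exprM -dn expf_n //.
  by apply: contraNneq nx => y0; rewrite -yx y0 expr0n.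
move=> hx.
have [z pz] := prim_ex.
have [i xi] := prim_rootP pz (expf_n nx).
move: hx; rewrite xi -exprM => /eqP; rewrite -(prim_order_dvd pz).
set m := (#|L|.-1)./2 in dn *.
have m0 : (0 < m)%N.
  rewrite lt0n; apply/eqP => h0; move: (ltn_ord i); rewrite [X in (_ < X)%N]dn h0 muln0 //.
rewrite [X in (X %| _)%N]dn dvdn_pmul2r //.
move=> di; exists (z ^+ (i %/ 2)); rewrite -exprM divnK //.
Qed.

Lemma rep (t c : L) : t != 0 -> exists a b : L, a ^+ 2 + t * b ^+ 2 = c.
Proof.
move=> nt.
have [z pz] := prim_ex.
set m := (#|L|.-1)./2.
have ev := n_even.
have dn : (#|L|.-1 = 2 * m)%N.
  by rewrite -{1}(odd_double_half #|L|.-1) (negbTE ev) add0n -muln2 mulnC.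
pose S := [set a ^+ 2 | a : L].
pose T := [set c - t * s | s in S].
have zS : (0:L) \in S by apply/imsetP; exists 0 => //; rewrite expr0n.
have cS : (m.+1 <= #|S|)%N.
  pose Z := [set z ^+ (2 * j) | j : 'I_m].
  have cZ : #|Z| = m.
    rewrite card_imset ?card_ord // => i j /eqP.
    rewrite (eq_prim_root_expr pz) !modn_small.
    - by move/eqP => /eqP; rewrite eqn_mul2l /= => /eqP /val_inj.
    - by rewrite dn ltn_mul2l /= ltn_ord.
    - by rewrite dn ltn_mul2l /= ltn_ord.
  have n0Z : (0:L) \notin Z.
    apply/imsetP => -[j _] /eqP; rewrite eq_sym expf_eq0.
    have z0 : z != 0.
      apply/eqP => z0; have := prim_expr_order pz.
      rewrite z0 expr0n eqn0Ngt (prim_order_gt0 pz) /= => /eqP; by rewrite eq_sym oner_eq0.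
    by rewrite (negbTE z0) andbF.
  have sub : (0 |: Z) \subset S.
    apply/subsetP => x; rewrite in_setU1 => /orP[/eqP -> // | /imsetP[j _ ->]].
    by apply/imsetP; exists (z ^+ j) => //; rewrite -exprM mulnC.
  by have := subset_leq_card sub; rewrite cardsU1 n0Z cZ.
have cT : #|T| = #|S|.
  by rewrite card_imset // => x y /addrI/oppr_inj/(mulfI nt).
have : (S :&: T) != set0.
  apply/eqP => E.
  have := max_card (S :|: T).
  rewrite cardsU E cards0 subn0 cT card_predS dn.
  by move: cS; rewrite -ltnS; lia.
case/set0Pn => x /setIP[/imsetP[a _ ->] /imsetP[s /imsetP[b _ ->] E]].
by exists a, b; rewrite E subrK.
Qed.

End GenFF.

Section PolyAux.
Variable F : fieldType.
Implicit Types (u v r M P : {poly F}).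

Lemma modeqP M a b : a %% M = b %% M <-> M %| a - b.
Proof.
rewrite /dvdp modpD modpN subr_eq0; split; first by move=> ->.
by move/eqP.
Qed.

Lemma inv_mod M r : coprimep M r -> exists s, M %| r * s - 1.
Proof.
case/Bezout_eq1_coprimepP => -[x y] /= e; exists y.
have -> : r * y - 1 = - (x * M) by rewrite -e; ring.
by rewrite dvdpNr dvdp_mull.
Qed.

Lemma irr_neq0 P : irreducible_poly P -> P != 0.
Proof. by case=> sP _; rewrite -size_poly_gt0 ltnW. Qed.

Lemma cancelP P k u : P != 0 -> P ^+ k.+1 %| P ^+ k * u -> P %| u.
Proof. by move=> nP; rewrite exprSr dvdp_mul2l // expf_neq0. Qed.

Lemma val_eq P nu m a u g : irreducible_poly P -> ~~ (P %| u) -> ~~ (P %| g) ->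
  (a < nu)%N -> P ^+ nu %| P ^+ m * u - P ^+ a * g -> m = a /\ P %| u - g.
Proof.
move=> iP Pu Pg anu D; have nP := irr_neq0 iP.
case: (ltngtP m a) => [ma|am|ma].
- exfalso; move/negP: Pu; apply; apply: (@cancelP P m) => //.
  have D1 : P ^+ m.+1 %| P ^+ m * u - P ^+ a * g.
    by apply: dvdp_trans D; apply: dvdp_exp2l; lia.
  have D2 : P ^+ m.+1 %| P ^+ a * g by apply: dvdp_mulr; apply: dvdp_exp2l.
  by have := dvdp_add D1 D2; rewrite subrK.
- exfalso; move/negP: Pg; apply; apply: (@cancelP P a) => //.
  have D1 : P ^+ a.+1 %| P ^+ m * u - P ^+ a * g.
    by apply: dvdp_trans D; apply: dvdp_exp2l.
  have D2 : P ^+ a.+1 %| P ^+ m * u by apply: dvdp_mulr; apply: dvdp_exp2l.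
  by have := dvdp_sub D2 D1; rewrite opprB addrC subrK.
- split => //; subst m; apply: (@cancelP P a) => //.
  rewrite mulrBr; apply: dvdp_trans D; apply: dvdp_exp2l; lia.
Qed.

Lemma decomp P h : irreducible_poly P -> h != 0 ->
  exists m h', h = P ^+ m * h' /\ ~~ (P %| h').
Proof.
move=> iP; have nP := irr_neq0 iP.
have sP : (1 < size P)%N by case: iP.
elim: {h}(size h) {-2}h (leqnn (size h)) => [|n IH] h sh nh.
  by move: nh; rewrite -size_poly_eq0; move: sh; case: (size h).
have [Ph|Ph] := boolP (P %| h); last by exists 0%N, h; rewrite expr0 mul1r.
case/dvdpP: Ph => h1 eh.
have nh1 : h1 != 0 by apply: contraNneq nh => e; rewrite eh e mul0r.
have sh1 : (size h1 <= n)%N.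
  move: sh; rewrite eh size_mul // (polySpred nh1) (polySpred nP) /=.
  move: sP; rewrite (polySpred nP); lia.
have [m [h' [e1 e2]]] := IH h1 sh1 nh1.
by exists m.+1, h'; split => //; rewrite eh e1 exprS; ring.
Qed.

Lemma half_poly : (2%:R : F) != 0 -> (2%:R : {poly F}) * ((2%:R : F)^-1)%:P = 1.
Proof. by move=> h2; rewrite -polyC_natr -polyCM mulfV. Qed.

Lemma hensel_sq P u t0 : (2%:R : F) != 0 -> irreducible_poly P ->
  ~~ (P %| t0) -> P %| t0 ^+ 2 - u ->
  forall n, exists t, P ^+ n.+1 %| t ^+ 2 - u /\ P %| t - t0.
Proof.
move=> h2 iP Pt0 D; have nP := irr_neq0 iP.
elim=> [|n [t [Dt Dtt]]]; first by exists t0; rewrite expr1 subrr dvdp0.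
have ct : coprimep P t.
  rewrite irreducible_poly_coprime //; apply: contra Pt0 => Pt.
  by have := dvdp_sub Pt Dtt; rewrite opprB addrC subrK.
have [w Dw] := inv_mod ct.
set k := n.+1 in Dt *.
case/dvdpP: Dt => e De.
have Eu : u = t ^+ 2 - e * P ^+ k by rewrite -De; ring.
set i2 := ((2%:R : F)^-1)%:P.
have H2 := half_poly h2; rewrite -/i2 in H2.
pose h := - i2 * e * w.
exists (t + P ^+ k * h); split; last first.
  rewrite addrAC; apply: dvdp_add => //; apply: dvdp_mulr.
  by rewrite /k exprS dvdp_mulIl.
have -> : (t + P ^+ k * h) ^+ 2 - u =
   P ^+ k * (e * (1 - t * w) - e * t * w * (2%:R * i2 - 1)) + P ^+ k * P ^+ k * h ^+ 2.
  rewrite Eu /h; ring.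
rewrite H2 subrr mulr0 subr0; apply: dvdp_add.
  rewrite exprSr; apply: dvdp_mul => //; apply: dvdp_mull.
  by rewrite -dvdpNr opprB.
apply: dvdp_mulr; rewrite exprSr; apply: dvdp_mul => //.
by rewrite /k exprS dvdp_mulIl.
Qed.

End PolyAux.

Lemma frob_pow (R : comNzRingType) (p : nat) (x y : R) j :
  p \in [pchar R] -> (x + y) ^+ (p ^ j) = x ^+ (p ^ j) + y ^+ (p ^ j).
Proof.
move=> hp; elim: j => [|j IH]; first by rewrite !expr1.
by rewrite expnSr !exprM IH -!(pFrobenius_autE hp) rmorphD.
Qed.

Lemma geom (q d : nat) : (0 < q)%N ->
  ((\sum_(i < d) q ^ i) * q.-1 + 1 = q ^ d)%N.
Proof.
case: q => // q' _; elim: d => [|d IH]; first by rewrite big_ord0.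
rewrite big_ord_recr /= mulnDl addnAC IH expnS.
by rewrite mulSn mulnC.
Qed.

Section Norm.
Variable F : finFieldType.
Variable P : {poly F}.
Hypothesis hPm : P \is monic.
Hypothesis hPi : irreducible_poly P.
Hypothesis h2 : (2%:R : F) != 0.
Hypothesis hP0 : P.[0] != 0.
Hypothesis hq : odd #|F|.

Let hI : monic_irreducible_poly P := (hPi, hPm).
Local Notation K := {poly %/ P with hI}.
Let qC : F -> K := qfpoly_const hI.
Let th : K := in_qpoly P 'X.
Let q := #|F|.
Let d := (size P).-1.

Lemma cardK : #|K| = (q ^ d)%N.
Proof. exact: card_qfpoly. Qed.

Lemma qCE : qC = qpolyC P. Proof. by []. Qed.

Lemma qC_inj : injective qC.
Proof. by move=> x y; rewrite qCE; apply: fmorph_inj. Qed.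

Lemma qC1 : qC 1 = 1.
Proof. by rewrite qCE rmorph1. Qed.

Lemma in_qpoly_eq0 r : (in_qpoly P r == 0 :> K) = (P %| r).
Proof.
apply/eqP/idP => [/(congr1 val) /= | H].
  rewrite (mk_monicE hI) => H; apply/modp_eq0P; rewrite Pdiv.IdomainMonic.modpE //.
apply: val_inj => /=; rewrite (mk_monicE hI).
have := modp_eq0 H; rewrite Pdiv.IdomainMonic.modpE // => H'; exact: H'.
Qed.

Lemma elt_horner (x : K) : x = (map_poly qC (x : {poly F})).[th].
Proof.
rewrite /th -in_qpoly_comp_horner comp_polyXr; apply: val_inj => /=.
by rewrite Pdiv.Ring.rmodp_small // size_mk_monic.
Qed.

Lemma rootP_th : (map_poly qC P).[th] = 0.
Proof.
rewrite /th -in_qpoly_comp_horner comp_polyXr; apply/eqP.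
by rewrite in_qpoly_eq0.
Qed.

Lemma q_gt1 : (1 < q)%N. Proof. exact: finNzRing_gt1. Qed.

Lemma charF : exists p e, p \in [pchar F] /\ q = (p ^ e)%N.
Proof.
have [p pp cp] := finPcharP F.
exists p, (logn p #|pPrimeCharType cp|); split => //.
exact: card_pprimeChar.
Qed.

Lemma frobK_add (x y : K) i : (x + y) ^+ (q ^ i) = x ^+ (q ^ i) + y ^+ (q ^ i).
Proof.
have [p [e [cp qe]]] := charF.
have cK : p \in [pchar K] by apply: (rmorph_pchar (qpolyC P)).
by rewrite qe -expnM frob_pow.
Qed.

Lemma qfix c i : (qC c) ^+ (q ^ i) = qC c.
Proof.
rewrite qCE -rmorphXn; congr qpolyC.
elim: i => [|i IH]; first by rewrite expr1.
by rewrite expnSr exprM IH expf_card.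
Qed.

Lemma horner_frob (B : {poly F}) (x : K) i :
  ((map_poly qC B).[x]) ^+ (q ^ i) = (map_poly qC B).[x ^+ (q ^ i)].
Proof.
rewrite !horner_coef.
rewrite (big_morph (fun y : K => y ^+ (q ^ i)) (id1 := 0) (op1 := +%R)); first last.
- by rewrite expr0n expn_eq0 gtn_eqF // ltnW // q_gt1.
- by move=> a b; rewrite frobK_add.
apply: eq_bigr => j _; rewrite exprMn coef_map qfix exprAC //.
Qed.

Lemma frobK_neg (x : K) i : (- x) ^+ (q ^ i) = - x ^+ (q ^ i).
Proof. by rewrite exprNn -signr_odd oddX hq orbT expr1 mulN1r. Qed.

Lemma frob_inj i : injective (fun x : K => x ^+ (q ^ i)).
Proof.
move=> x y /= E; apply/eqP; rewrite -subr_eq0.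
have : (x - y) ^+ (q ^ i) == 0 by rewrite frobK_add frobK_neg E subrr.
by rewrite expf_eq0 => /andP[].
Qed.

Lemma in_qpoly_val (x : K) : in_qpoly P (x : {poly F}) = x.
Proof.
apply: val_inj => /=; by rewrite Pdiv.Ring.rmodp_small // size_mk_monic.
Qed.

Lemma th_neq0 : th != 0.
Proof.
rewrite /th in_qpoly_eq0 -irreducible_poly_coprime // coprimepX.
by rewrite rootE.
Qed.

Lemma sizeP : size P = d.+1.
Proof. by rewrite /d prednK // ltnW //; case: hPi. Qed.

Lemma all_fix k : th ^+ (q ^ k) = th -> forall x : K, x ^+ (q ^ k) = x.
Proof. by move=> H x; rewrite [x]elt_horner horner_frob H. Qed.

Lemma distinct1 k : (0 < k)%N -> (k < d)%N -> th ^+ (q ^ k) != th.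
Proof.
move=> k0 kd; apply/negP => /eqP H.
have AF := all_fix H.
pose Z : {poly K} := 'X^(q ^ k) - 'X.
have sZ : size Z = (q ^ k).+1.
  rewrite /Z size_polyDl ?size_polyXn // size_polyN size_polyX ltnS.
  by apply: leq_trans (q_gt1) _; rewrite -{1}(expn1 q) leq_exp2l // q_gt1.
have nZ : Z != 0 by rewrite -size_poly_eq0 sZ.
have AR : all (root Z) (enum K).
  by apply/allP => x _; rewrite /root /Z hornerD hornerN hornerXn hornerX AF subrr.
have := @max_poly_roots _ Z (enum K) nZ AR (enum_uniq _).
rewrite -cardE cardK sZ ltnS leq_exp2l ?q_gt1 //.
by rewrite leqNgt kd.
Qed.

Lemma distinct2 i j : (i < j)%N -> (j < d)%N -> th ^+ (q ^ i) != th ^+ (q ^ j).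
Proof.
move=> ij jd; apply/negP => /eqP H.
have : th ^+ (q ^ (j - i)) == th.
  apply/eqP; apply: (@frob_inj i) => /=.
  by rewrite -exprM -expnD subnK ?(ltnW ij) // H.
have h1 : (0 < j - i)%N by rewrite subn_gt0.
have h3 : (j - i < d)%N by apply: leq_ltn_trans jd; apply: leq_subr.
by rewrite (negbTE (distinct1 h1 h3)).
Qed.

Let rs := [seq th ^+ (q ^ i) | i <- index_iota 0 d].

Lemma rs_uniq : uniq rs.
Proof.
rewrite map_inj_in_uniq ?iota_uniq // => i j; rewrite !mem_index_iota /= => id jd E.
case: (ltngtP i j) => // [ij|ji].
  by move: (distinct2 ij jd); rewrite E eqxx.
by move: (distinct2 ji id); rewrite E eqxx.
Qed.

Lemma factorP : map_poly qC P = \prod_(z <- rs) ('X - z%:P).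
Proof.
have sm : size (map_poly qC P) = (size rs).+1.
  by rewrite size_map size_iota subn0 qCE size_map_poly sizeP.
rewrite [LHS](all_roots_prod_XsubC sm).
- by rewrite qCE lead_coef_map (monicP hPm) rmorph1 scale1r.
- apply/allP => z /mapP[i _ ->]; rewrite /root -horner_frob rootP_th.
  by rewrite expr0n expn_eq0 gtn_eqF // ltnW // q_gt1.
- by rewrite uniq_rootsE rs_uniq.
Qed.

Lemma norm_eq : qC P.[0] = (- th) ^+ (\sum_(i < d) q ^ i).
Proof.
have := congr1 (fun A : {poly K} => A.[0]) factorP => /=.
rewrite horner_prod big_map.
have -> : (map_poly qC P).[0] = qC P.[0].
  have E := horner_map (qpolyC P) P 0; rewrite rmorph0 in E; exact: E.
move=> ->; rewrite big_mkord -prodrXr; apply: eq_bigr => i _.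
by rewrite hornerXsubC sub0r frobK_neg.
Qed.

Lemma two_K : (2%:R : K) != 0.
Proof.
apply: contra h2 => /eqP H; apply/eqP; apply: qC_inj.
by rewrite qCE rmorph_nat rmorph0; exact: H.
Qed.

Lemma sqK_iff : (exists y : K, y ^+ 2 = - th) <-> (exists c : F, c ^+ 2 = P.[0]).
Proof.
have nth : -th != 0 by rewrite oppr_eq0 th_neq0.
set m := (#|F|.-1)./2.
set S := (\sum_(i < d) q ^ i)%N.
have hm : (#|F|.-1 = m.*2)%N.
  by rewrite -{1}(odd_double_half #|F|.-1) (negbTE (n_even h2)) add0n.
have hK : ((#|K|.-1)./2 = S * m)%N.
  rewrite cardK -(geom d (ltnW q_gt1)) addn1 /= hm -doubleMr half_double //.
have E : (-th) ^+ ((#|K|.-1)./2) = qC (P.[0] ^+ m).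
  by rewrite hK exprM -norm_eq qCE rmorphXn.
split.
  move/(euler two_K nth); rewrite E -qC1 => /qC_inj.
  by move/(euler h2 hP0).
move/(euler h2 hP0) => H; apply/(euler two_K nth).
by rewrite E H qC1.
Qed.

Lemma sq_poly_iff : (exists r : {poly F}, P %| r ^+ 2 + 'X) <-> (exists c : F, c ^+ 2 = P.[0]).
Proof.
rewrite -sqK_iff; split.
  case=> r Dr; exists (in_qpoly P r : K); apply/eqP; rewrite -addr_eq0.
  have : in_qpoly P (r ^+ 2 + 'X) == 0 :> K by rewrite in_qpoly_eq0.
  by rewrite rmorphD rmorphXn.
case=> y Dy; exists (y : {poly F}); rewrite -in_qpoly_eq0.
by rewrite rmorphD rmorphXn /= in_qpoly_val Dy addNr.
Qed.

Lemma X_cop : coprimep P 'X.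
Proof. by rewrite coprimepX rootE. Qed.

Lemma rep_unit g n : ~~ (P %| g) ->
  exists A B : {poly F}, P ^+ n.+1 %| A ^+ 2 + 'X * B ^+ 2 - g.
Proof.
move=> Pg.
have [a [b E]] := rep two_K (in_qpoly P g) th_neq0.
set a' := (a : {poly F}); set b' := (b : {poly F}).
have D : P %| a' ^+ 2 + 'X * b' ^+ 2 - g.
  rewrite -in_qpoly_eq0 !rmorphB !rmorphD !rmorphXn rmorphM /=.
  by rewrite !in_qpoly_val -/th E subrr.
have [Pa|Pa] := boolP (P %| a'); last first.
  have D' : P %| a' ^+ 2 - (g - 'X * b' ^+ 2).
    by move: D; congr (_ %| _); ring.
  have [t [Dt _]] := hensel_sq h2 hPi Pa D' n.
  by exists t, b'; move: Dt; congr (_ %| _); ring.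
have Pb : ~~ (P %| b').
  apply: contra Pg => Pb.
  have : P %| a' ^+ 2 + 'X * b' ^+ 2.
    by apply: dvdp_add; [apply: dvdp_exp | apply: dvdp_mull; apply: dvdp_exp].
  by move=> H; have := dvdp_sub H D; rewrite opprB addrC subrK.
have [w Dw] := inv_mod (coprimep_expl n.+1 X_cop).
have Dw1 : P %| 'X * w - 1 by apply: dvdp_trans Dw; rewrite exprS dvdp_mulIl.
have D' : P %| b' ^+ 2 - (g - a' ^+ 2) * w.
  have -> : b' ^+ 2 - (g - a' ^+ 2) * w =
    w * (a' ^+ 2 + 'X * b' ^+ 2 - g) - b' ^+ 2 * ('X * w - 1) by ring.
  by apply: dvdp_sub; apply: dvdp_mull.
have [t [Dt _]] := hensel_sq h2 hPi Pb D' n.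
exists a', t.
have -> : a' ^+ 2 + 'X * t ^+ 2 - g =
  'X * (t ^+ 2 - (g - a' ^+ 2) * w) + (g - a' ^+ 2) * ('X * w - 1) by ring.
by apply: dvdp_add; apply: dvdp_mull.
Qed.

End Norm.

Lemma two_F (F : finFieldType) : odd #|F| -> (2%:R : F) != 0.
Proof.
move=> hq; apply/negP => /eqP H.
have cp : (2%N \in [pchar F]) by rewrite inE /= H eqxx.
have := card_pprimeChar cp; set n := logn _ _ => E.
have : #|F| = (2 ^ n)%N by exact: E.
move=> E'; move: hq (finNzRing_gt1 F); rewrite E' oddX /=.
by case: n {E E'} => //.
Qed.

Section Aux2.
Variable F : fieldType.

Lemma X_dvd (p : {poly F}) : ('X %| p) = (p.[0] == 0).
Proof.
have := polyXsubCP p 0; rewrite polyC0 subr0 => H.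
by apply/idP/eqP => /H.
Qed.

Lemma irrX : irreducible_poly ('X : {poly F}).
Proof. by have := irredp_XsubC (0 : F); rewrite polyC0 subr0. Qed.

Lemma ndvd_mul (P x y : {poly F}) : irreducible_poly P ->
  ~~ (P %| x) -> ~~ (P %| y) -> ~~ (P %| x * y).
Proof.
move=> iP; rewrite -!irreducible_poly_coprime // coprimepMr => -> ->. done.
Qed.

Lemma ndvd_sq (P x : {poly F}) : irreducible_poly P -> ~~ (P %| x) -> ~~ (P %| x ^+ 2).
Proof. by move=> iP Px; rewrite expr2 ndvd_mul. Qed.

Lemma ndvd_add (P x y : {poly F}) : ~~ (P %| x) -> P %| y -> ~~ (P %| x + y).
Proof. by move=> Px Py; rewrite dvdp_addl. Qed.

Lemma form_val (P A B : {poly F}) : irreducible_poly P -> coprimep P 'X ->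
  (forall r, ~~ (P %| r ^+ 2 + 'X)) -> (A != 0) || (B != 0) ->
  exists m u, A ^+ 2 + 'X * B ^+ 2 = P ^+ (2 * m) * u /\ ~~ (P %| u).
Proof.
move=> iP cX nsq AB.
have PX : ~~ (P %| 'X) by rewrite -irreducible_poly_coprime.
have [A0|nA] := eqVneq A 0.
  rewrite A0 eqxx /= in AB.
  have [b [B' [eB PB]]] := decomp iP AB.
  exists b, ('X * B' ^+ 2); split; last by rewrite ndvd_mul // ndvd_sq.
  by rewrite A0 eB mulnC exprM; ring.
have [B0|nB] := eqVneq B 0.
  have [a [A' [eA PA]]] := decomp iP nA.
  exists a, (A' ^+ 2); split; last by rewrite ndvd_sq.
  by rewrite B0 eA mulnC exprM; ring.
have [a [A' [eA PA]]] := decomp iP nA.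
have [b [B' [eB PB]]] := decomp iP nB.
case: (ltngtP a b) => [ab|ba|ab].
- have [e be] : exists e, b = (a + e.+1)%N by exists (b - a)%N.-1; lia.
  subst b; exists a, (A' ^+ 2 + 'X * P ^+ (2 * e.+1) * B' ^+ 2); split.
    rewrite eA eB !exprD ![(2 * _)%N]mulnC !exprM; ring.
  apply: ndvd_add; first by rewrite ndvd_sq.
  by apply: dvdp_mulr; apply: dvdp_mull; apply: dvdp_exp; last exact: dvdpp.
- have [e be] : exists e, a = (b + e.+1)%N by exists (a - b)%N.-1; lia.
  subst a; exists b, (P ^+ (2 * e.+1) * A' ^+ 2 + 'X * B' ^+ 2); split.
    rewrite eA eB !exprD ![(2 * _)%N]mulnC !exprM; ring.
  rewrite addrC; apply: ndvd_add; first by rewrite ndvd_mul // ndvd_sq.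
  by apply: dvdp_mulr; apply: dvdp_exp; last exact: dvdpp.
- subst b; exists a, (A' ^+ 2 + 'X * B' ^+ 2); split.
    by rewrite eA eB mulnC exprM; ring.
  apply/negP => Pu.
  have cB : coprimep P B' by rewrite irreducible_poly_coprime.
  have [w Dw] := inv_mod cB.
  move/negP: (nsq (A' * w)); apply.
  have -> : (A' * w) ^+ 2 + 'X = w ^+ 2 * (A' ^+ 2 + 'X * B' ^+ 2)
     - 'X * (B' * w - 1) * (B' * w + 1) by ring.
  by apply: dvdp_sub; [apply: dvdp_mull | apply: dvdp_mulr; apply: dvdp_mull].
Qed.

Lemma formX_val (A B : {poly F}) : (A != 0) || (B != 0) ->
  exists m u (w : F), A ^+ 2 + 'X * B ^+ 2 = 'X ^+ m * u /\ u.[0] = w ^+ 2 /\ w != 0.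
Proof.
move=> AB; have iX := irrX.
have [A0|nA] := eqVneq A 0.
  rewrite A0 eqxx /= in AB.
  have [b [B' [eB PB]]] := decomp iX AB.
  exists (2 * b).+1, (B' ^+ 2), B'.[0]; split; last by rewrite horner_exp; split => //; move: PB; rewrite X_dvd.
  have -> : ('X ^+ (2 * b).+1 : {poly F}) = 'X * ('X ^+ b) ^+ 2 by rewrite exprS mulnC exprM.
  by rewrite A0 eB; ring.
have [B0|nB] := eqVneq B 0.
  have [a [A' [eA PA]]] := decomp iX nA.
  exists (2 * a), (A' ^+ 2), A'.[0]; split; last by rewrite horner_exp; split => //; move: PA; rewrite X_dvd.
  have -> : ('X ^+ (2 * a) : {poly F}) = ('X ^+ a) ^+ 2 by rewrite mulnC exprM.
  by rewrite B0 eA; ring.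
have [a [A' [eA PA]]] := decomp iX nA.
have [b [B' [eB PB]]] := decomp iX nB.
move: PA PB; rewrite !X_dvd => PA PB.
case: (leqP a b) => [ab|ba].
- have [e be] : exists e, b = (a + e)%N by exists (b - a)%N; lia.
  subst b; exists (2 * a), (A' ^+ 2 + 'X ^+ (2 * e).+1 * B' ^+ 2), A'.[0]; split.
    have -> : ('X ^+ (2 * a) : {poly F}) = ('X ^+ a) ^+ 2 by rewrite mulnC exprM.
    have -> : ('X ^+ (2 * e).+1 : {poly F}) = 'X * ('X ^+ e) ^+ 2 by rewrite exprS mulnC exprM.
    rewrite eA eB exprD; ring.
  split => //; by rewrite hornerD [in X in _ + X]hornerM !horner_exp hornerX expr0n /= mul0r addr0.
- have [e be] : exists e, a = (b + e.+1)%N by exists (a - b)%N.-1; lia.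
  subst a; exists (2 * b).+1, ('X ^+ (2 * e).+1 * A' ^+ 2 + B' ^+ 2), B'.[0]; split.
    have E : ('X ^+ (b + e.+1) : {poly F}) ^+ 2 = 'X ^+ (2 * b).+1 * 'X ^+ (2 * e).+1.
      rewrite -exprM -exprD; congr (_ ^+ _); lia.
    have E2 : ('X ^+ (2 * b).+1 : {poly F}) = 'X * ('X ^+ b) ^+ 2 by rewrite exprS mulnC exprM.
    rewrite eA eB !exprMn E E2; ring.
  split => //; by rewrite hornerD [in X in X + _]hornerM !horner_exp hornerX expr0n /= mul0r add0r.
Qed.

End Aux2.
Unset Implicit Arguments. Set Strict Implicit.

Theorem mainTheorem8 (F : finFieldType) (hq : odd #|{: F}|)
  (P : {poly F}) (hPm : P \is monic) (hPi : irreducible_poly P)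
  (nu : nat) (hnu : (1 <= nu)%N) (f : {poly F})
  (hf : f %% P ^+ nu != 0)
  (alpha : nat) (g : {poly F}) (halpha : (alpha < nu)%N)
  (hfg : f %% P ^+ nu = (P ^+ alpha * g) %% P ^+ nu)
  (hmax : forall (beta : nat) (h : {poly F}), (beta < nu)%N ->
      f %% P ^+ nu = (P ^+ beta * h) %% P ^+ nu -> (beta <= alpha)%N) :
  (chi P = -1 -> (inA (P ^+ nu) f <-> ~~ odd alpha)) /\
  (chi P = 0 -> (inA (P ^+ nu) f <-> chi g = 1)) /\
  (chi P = 1 -> inA (P ^+ nu) f).
Proof.
have h2 := two_F hq.
have nP := irr_neq0 hPi.
have nuE : nu = nu.-1.+1 by rewrite prednK.
have Pg : ~~ (P %| g).
  apply/negP => /dvdpP [g1 eg].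
  have E : f %% P ^+ nu = (P ^+ alpha.+1 * g1) %% P ^+ nu.
    by rewrite hfg eg exprS; congr (_ %% _); ring.
  have [lt|ge] := ltnP alpha.+1 nu.
    by have := hmax _ _ lt E; rewrite ltnn.
  have an : alpha.+1 = nu by apply/eqP; rewrite eqn_leq halpha ge.
  by move: hf; rewrite E an mulrC modp_mull eqxx.
have inA_iff : inA (P ^+ nu) f <->
    exists A B, P ^+ nu %| A ^+ 2 + 'X * B ^+ 2 - P ^+ alpha * g.
  rewrite /inA; split => -[A [B E]]; exists A, B.
    by apply/modeqP; rewrite E hfg.
  by rewrite hfg; apply/modeqP.
have n00 : ~~ (P ^+ nu %| P ^+ alpha * g).
  apply/negP => D; move/negP: Pg; apply; apply: (@cancelP _ P alpha) => //.
  by apply: dvdp_trans D; apply: dvdp_exp2l.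
have zero_case : forall A B, P ^+ nu %| A ^+ 2 + 'X * B ^+ 2 - P ^+ alpha * g ->
    (A != 0) || (B != 0).
  move=> A B D; apply: contraTT D; rewrite negb_or !negbK => /andP[/eqP A0 /eqP B0].
  by rewrite A0 B0 !expr0n /= mulr0 add0r sub0r dvdpNr.
split; [|split].
- rewrite /chi; case: ifP => [_|/negbT c0]; first by [].
  case: ifP => [_|/negbT nex _]; first by [].
  move/existsPn: nex => nex.
  have nsq : forall r, ~~ (P %| r ^+ 2 + 'X).
    move=> r; apply/negP => D.
    have [c Ec] : exists c, c ^+ 2 = P.[0].
      by apply/(sq_poly_iff hPm hPi h2 c0 hq); exists r.
    by move: (nex c); rewrite Ec eqxx.
  have cX : coprimep P 'X by rewrite coprimepX rootE.
  rewrite inA_iff; split.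
    case=> A [B D].
    have [m [u [Eu Pu]]] := form_val hPi cX nsq (zero_case _ _ D).
    rewrite Eu in D.
    have [Em _] := val_eq hPi Pu Pg halpha D.
    by rewrite -Em oddM.
  move=> ev.
  set k := alpha./2.
  have ea : alpha = (k * 2)%N.
    by rewrite -{1}(odd_double_half alpha) (negbTE ev) add0n muln2.
  have [A0 [B0 D0]] := rep_unit hPm hPi h2 c0 nu.-1 Pg.
  exists (P ^+ k * A0), (P ^+ k * B0).
  have -> : (P ^+ k * A0) ^+ 2 + 'X * (P ^+ k * B0) ^+ 2 - P ^+ alpha * g =
     (P ^+ k) ^+ 2 * (A0 ^+ 2 + 'X * B0 ^+ 2 - g).
    by rewrite ea exprM; ring.
  by rewrite nuE; apply: dvdp_mull.
- rewrite /chi; case: ifP => [/eqP c0 _|]; last by case: ifP.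
  have XP : 'X %| P by rewrite X_dvd c0.
  have PX : P = 'X.
    case: hPi => _ H.
    have := H 'X (_ : size ('X : {poly F}) != 1%N) XP.
    rewrite size_polyX => /(_ isT).
    by rewrite eqp_sym eqp_monic ?monicX // => /eqP.
  subst P.
  split.
    rewrite inA_iff => -[A [B D]].
    have [m [u [w [Eu [u0 w0]]]]] := formX_val (zero_case _ _ D).
    rewrite Eu in D.
    have Xu : ~~ ('X %| u) by rewrite X_dvd u0 sqrf_eq0.
    have [Em Dug] := val_eq hPi Xu Pg halpha D.
    move: Dug; rewrite X_dvd hornerD hornerN u0 subr_eq0 => /eqP gw.
    rewrite /chi -gw sqrf_eq0 (negbTE w0) ifT //.
    by apply/existsP; exists w.
  rewrite /chi; case: ifP => // /negbT g0; case: ifP => // /existsP[y /eqP Ey] _.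
  have y0 : y != 0 by apply: contraNneq g0 => y0; rewrite -Ey y0 expr0n.
  have Xt : ~~ ('X %| y%:P) by rewrite X_dvd hornerC.
  have D : 'X %| y%:P ^+ 2 - g by rewrite X_dvd hornerD hornerN horner_exp hornerC Ey subrr.
  have [t [Dt _]] := hensel_sq h2 hPi Xt D nu.-1.
  rewrite -nuE in Dt.
  rewrite inA_iff.
  set k := alpha./2.
  have ea : alpha = (odd alpha + k * 2)%N by rewrite muln2 odd_double_half.
  case: (boolP (odd alpha)) => oa; [rewrite oa add1n in ea | rewrite (negbTE oa) add0n in ea].
    exists 0, ('X ^+ k * t).
    have -> : 0 ^+ 2 + 'X * ('X ^+ k * t) ^+ 2 - 'X ^+ alpha * g =
       'X * ('X ^+ k) ^+ 2 * (t ^+ 2 - g).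
      have E1 : ('X ^+ alpha : {poly F}) = 'X * ('X ^+ k) ^+ 2 by rewrite ea exprS exprM.
      by rewrite E1; ring.
    by apply: dvdp_mull.
  exists ('X ^+ k * t), 0.
  have -> : ('X ^+ k * t) ^+ 2 + 'X * 0 ^+ 2 - 'X ^+ alpha * g =
     ('X ^+ k) ^+ 2 * (t ^+ 2 - g).
    have E1 : ('X ^+ alpha : {poly F}) = ('X ^+ k) ^+ 2 by rewrite ea exprM.
    by rewrite E1; ring.
  by apply: dvdp_mull.
- rewrite /chi; case: ifP => // /negbT c0; case: ifP => // /existsP[y /eqP Ey] _.
  have [r Dr] : exists r, P %| r ^+ 2 + 'X.
    by apply/(sq_poly_iff hPm hPi h2 c0 hq); exists y.
  have cX : coprimep P 'X by rewrite coprimepX rootE.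
  have Pr : ~~ (P %| r).
    apply/negP => Pr; move: cX; rewrite irreducible_poly_coprime // => /negP; apply.
    have := dvdp_sub Dr (dvdp_mulr r Pr); rewrite expr2 addrC addKr.
    done.
  have D : P %| r ^+ 2 - - 'X by rewrite opprK.
  have [t [Dt Dtr]] := hensel_sq h2 hPi Pr D nu.-1.
  rewrite -nuE opprK in Dt.
  have Pt : ~~ (P %| t).
    apply: contra Pr => Pt; have := dvdp_sub Pt Dtr.
    by rewrite opprB addrC subrK.
  have cop : coprimep (P ^+ nu) t.
    by apply: coprimep_expl; rewrite irreducible_poly_coprime.
  have [s Ds] := inv_mod cop.
  set i2 := ((2%:R : F)^-1)%:P.
  have H2 := half_poly h2; rewrite -/i2 in H2.
  exists (i2 * (1 + f)), (s * i2 * (f - 1)); apply/modeqP.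
  have -> : (i2 * (1 + f)) ^+ 2 + 'X * (s * i2 * (f - 1)) ^+ 2 - f =
     (t ^+ 2 + 'X) * (s * i2 * (f - 1)) ^+ 2
     - (t * s - 1) * (t * s + 1) * (i2 * (f - 1)) ^+ 2
     + (2%:R * i2 - 1) * (2%:R * i2 + 1) * f by ring.
  rewrite H2 subrr !mul0r addr0; apply: dvdp_sub.
    by apply: dvdp_mulr.
  by apply: dvdp_mulr; apply: dvdp_mulr.
Qed.
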